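(* Let $k\ge2$ and $f\ge1$ be integers, let $p,\omega\in(0,1)$, and let $F$ be a $k$-partite $k$-graph with $f$ vertices. There exist $\mu_0>0$ and $n_0$ such that for all $\mu\in(0,\mu_0]$ and $n\ge n_0$ the following holds: if $H$ is a $(p,\mu)$-dense $k$-partite $k$-graph each of whose parts has exactly $n$ vertices, then $H$ contains an $F$-tiling covering all but at most $\omega n$ vertices in each part of $H$.
   Context: A $k$-partite $k$-graph $H$ is a $k$-graph with a fixed partition $V(H)=V_1\cup\dots\cup V_k$ (its parts) such that every edge meets each $V_i$ in at most one vertex. $H$ (with $N=|V(H)|$ vertices) is $(p,\mu)$-dense if for all $X_i\subseteq V_i$, $e_H(X_1,\dots,X_k)\ge p|X_1|\cdots|X_k|-\mu N^k$, where $e_H(X_1,\dots,X_k)$ is the number of $(x_1,\dots,x_k)\in X_1\times\dots\times X_k$ with $\{x_1,\dots,x_k\}\in E(H)$. An $F$-tiling in $H$ is a set of pairwise vertex-disjoint subgraphs of $H$, each isomorphic to $F$. *)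

(* Defs.v *)
From HB Require Import structures.
From mathcomp Require Import all_boot all_order all_algebra.
From mathcomp Require Import reals.
Set Implicit Arguments. Unset Strict Implicit. Unset Printing Implicit Defensive.
Import Order.TTheory GRing.Theory Num.Theory.

Definition kpartite_kgraph (k : nat) (V : finType) (part : V -> 'I_k)
  (E : {set {set V}}) : Prop :=
  forall e, e \in E -> #|e| = k /\ forall i : 'I_k, #|[set v in e | part v == i]| <= 1.

(* Host graphs with k parts each of exactly n vertices: vertex set 'I_k * 'I_n,
   the part of (i, x) being i. *)
Definition hvert (k n : nat) := ('I_k * 'I_n)%type.

Definition e_H (k n : nat) (E : {set {set hvert k n}}) (X : 'I_k -> {set 'I_n}) : nat :=
  #|[set t : {ffun 'I_k -> 'I_n} |
      [forall i, t i \in X i] && ([set (i, t i) | i : 'I_k] \in E)]|.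

(* (p, mu)-dense, with N = |V(H)| = k n. *)
Definition dense (R : realType) (k n : nat) (p mu : R) (E : {set {set hvert k n}}) : Prop :=
  forall X : 'I_k -> {set 'I_n},
    (p * (\prod_(i < k) (#|X i|)%:R) - mu * ((k * n)%:R) ^+ k <= (e_H E X)%:R)%R.

Definition is_F_tiling (k n : nat) (VF : finType) (EF : {set {set VF}})
  (E : {set {set hvert k n}}) (m : nat) (phi : 'I_m -> VF -> hvert k n) : Prop :=
  (forall j, injective (phi j)) /\
  (forall j, forall e, e \in EF -> phi j @: e \in E) /\
  (forall j j', j != j' -> [disjoint codom (phi j) & codom (phi j')]).

Definition tiling_cover (k n : nat) (VF : finType) (m : nat)
  (phi : 'I_m -> VF -> hvert k n) : {set hvert k n} :=
  \bigcup_(j < m) [set phi j x | x : VF].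

(* Main.v *)
Require Import Defs.
From HB Require Import structures.
From mathcomp Require Import all_boot all_order all_algebra.
From mathcomp Require Import reals.
From mathcomp Require Import zify ring lra.
Import Order.TTheory GRing.Theory Num.Theory.
Set Implicit Arguments. Unset Strict Implicit.

Lemma pw (a b f : nat) : a * b ^ f + b * a ^ f <= a ^ f.+1 + b ^ f.+1.
Proof.
wlog ab : a b / a <= b.
  move=> H; case: (leqP a b) => h; first exact: H.
  rewrite addnC [X in _ <= X]addnC; apply: H; exact: ltnW.
have h : a ^ f <= b ^ f by case: f => [|f]; rewrite ?expn0 // leq_exp2r.
rewrite !expnS; set u := a ^ f; set v := b ^ f; nia.
Qed.

Lemma cheb (T : finType) (d : T -> nat) f :
  (\sum_t d t) * (\sum_t d t ^ f) <= #|T| * \sum_t d t ^ f.+1.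
Proof.
have E1 : \sum_s \sum_t (d s * d t ^ f + d t * d s ^ f) = 2 * ((\sum_t d t) * (\sum_t d t ^ f)).
  under eq_bigr => s _ do rewrite big_split.
  rewrite big_split /= mul2n -addnn; congr (_ + _).
    rewrite big_distrl /=; apply: eq_bigr => s _; rewrite big_distrr //.
  rewrite exchange_big big_distrl /=; apply: eq_bigr => s _; rewrite big_distrr //.
have E2 : \sum_s \sum_t (d s ^ f.+1 + d t ^ f.+1) = 2 * (#|T| * \sum_t d t ^ f.+1).
  under eq_bigr => s _ do rewrite big_split.
  rewrite big_split /= mul2n -addnn; congr (_ + _).
    rewrite [RHS]big_distrr /=; apply: eq_bigr => s _; rewrite sum_nat_const mulnC //.
  rewrite exchange_big /= [RHS]big_distrr /=; apply: eq_bigr => s _; rewrite sum_nat_const mulnC //.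
rewrite -(leq_pmul2l (isT : 0 < 2)) -E1 -E2.
apply: leq_sum => s _; apply: leq_sum => t _; exact: pw.
Qed.

Lemma powmean (T : finType) (d : T -> nat) f :
  (\sum_t d t) ^ f * #|T| <= #|T| ^ f * \sum_t d t ^ f.
Proof.
elim: f => [|f IH].
  rewrite expn0 mul1n; under eq_bigr do rewrite expn0; by rewrite sum1_card mul1n.
rewrite expnS -mulnA (leq_trans (leq_mul (leqnn _) IH)) //.
by rewrite mulnCA expnS [#|T| * _]mulnC -mulnA leq_mul2l cheb orbT.
Qed.

Lemma ffbound n f : n ^ f.+1 <= n * n ^_ f + f * f * n ^ f.
Proof.
elim: f => [|f IH]; first by rewrite ffactn0 !muln1 expn1 mul0n addn0.
have h1 : n ^_ f <= n ^ f.
  elim: (f) => [|g IHg]; first by rewrite ffactn0.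
  rewrite ffactnSr expnS mulnC; apply: leq_mul => //; exact: leq_subr.
rewrite ffactnSr (expnS n f.+1) (expnS n f) in IH *.
have h2 : n <= (n - f) + f by lia.
set a := n ^_ f in IH h1 *; set b := n ^ f in IH h1 *; set c := n - f in h2 *.
have h3 : n * (n * a) <= n * a * c + f * (n * b).
  have : n * a * n <= n * a * (c + f) by rewrite leq_mul2l h2 orbT.
  have : n * a * f <= n * b * f by rewrite leq_mul2r leq_mul2l h1 !orbT.
  nia.
have h4 : n * (n * b) <= n * (n * a) + f * f * (n * b) by have := leq_mul (leqnn n) IH; nia.
nia.
Qed.

Lemma card_sum (T : finType) (P : pred T) : #|[set t | P t]| = \sum_t (P t : nat).
Proof.
rewrite -sum1_card big_mkcond /=; apply: eq_bigr => t _; rewrite inE; by case: (P t).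
Qed.

Lemma exists_inj (VF : finType) n : #|VF| <= n -> exists u : {ffun VF -> 'I_n}, injective u.
Proof.
move=> h; exists [ffun v => widen_ord h (enum_rank v)].
move=> x y; rewrite !ffunE => /(congr1 val) /= /val_inj; exact: enum_rank_inj.
Qed.

Lemma kst (VF T : finType) (n D : nat) (r : 'I_n -> T -> bool) :
  0 < D -> 2 * D ^ #|VF| * #|VF| * #|VF| + #|VF| < n ->
  n * #|T| <= (\sum_t #|[set x | r x t]|) * D ->
  exists u : {ffun VF -> 'I_n}, injective u /\
    #|T| <= #|[set t | [forall v, r (u v) t]]| * (2 * D ^ #|VF|).
Proof.
move=> D0 hn hS.
set f := #|VF| in hn *.
have fn : f <= n by lia.
have [u0 u0i] := exists_inj fn.
pose d t := #|[set x | r x t]|.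
pose c (u : {ffun VF -> 'I_n}) := #|[set t | [forall v, r (u v) t]]|.
have Wd : \sum_u c u = \sum_t d t ^ f.
  rewrite /c; under eq_bigr do rewrite card_sum.
  rewrite exchange_big /=; apply: eq_bigr => t _.
  rewrite -card_sum /d /f -card_ffun_on; apply: eq_card => u; rewrite inE.
  apply/forallP/ffun_onP => h v; move: (h v); rewrite ?inE //.
have [T0|Tpos] := posnP #|T|.
  by exists u0; split => //; rewrite T0.
have pm := powmean d f.
set S := \sum_t d t in pm hS.
set W := \sum_u c u in Wd.
have key1 : n ^ f * #|T| <= W * D ^ f.
  have h1 : (n * #|T|) ^ f <= (S * D) ^ f by case: (f) => [|g]; rewrite ?expn0 // leq_exp2r.
  rewrite !expnMn in h1.
  have h2 : n ^ f * #|T| ^ f * #|T| <= #|T| ^ f * (W * D ^ f).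
    rewrite Wd; apply: (leq_trans (leq_mul h1 (leqnn _))).
    by rewrite mulnAC mulnA leq_mul2r pm orbT.
  have Tf : 0 < #|T| ^ f by rewrite expn_gt0 Tpos.
  by rewrite -(leq_pmul2l Tf) mulnA [#|T| ^ f * _]mulnC.
set a := n ^ f in key1 *.
pose M := \max_(u : {ffun VF -> 'I_n} | injectiveb u) c u.
have WIN : W = \sum_(u : {ffun VF -> 'I_n} | injectiveb u) c u + \sum_(u : {ffun VF -> 'I_n} | ~~ injectiveb u) c u by rewrite /W (bigID (fun u : {ffun VF -> 'I_n} => injectiveb u)).
have csum (P : pred {ffun VF -> 'I_n}) (K : nat) : \sum_(u | P u) K = #|[set u | P u]| * K.
  by rewrite -sum1dep_card big_distrl /=; apply: eq_bigr => *; rewrite mul1n.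
have Ib : \sum_(u : {ffun VF -> 'I_n} | injectiveb u) c u <= a * M.
  apply: (@leq_trans (\sum_(u : {ffun VF -> 'I_n} | injectiveb u) M)); first by apply: leq_sum => u hu; exact: leq_bigmax_cond.
  rewrite csum leq_mul2r; apply/orP; right.
  apply: (leq_trans (max_card _)); by rewrite card_ffun card_ord.
have NIb : \sum_(u : {ffun VF -> 'I_n} | ~~ injectiveb u) c u <= (a - n ^_ f) * #|T|.
  apply: (@leq_trans (\sum_(u : {ffun VF -> 'I_n} | ~~ injectiveb u) #|T|)); first by apply: leq_sum => u hu; exact: max_card.
  rewrite csum leq_mul2r; apply/orP; right.
  have := cardC [set u : {ffun VF -> 'I_n} | injectiveb u].
  rewrite card_inj_ffuns card_ffun card_ord -/f -/a => <-.
  rewrite addKn; apply: eq_leq; apply: eq_card => u; by rewrite !inE.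
have fb := ffbound n f.
rewrite expnS -/a in fb.
have [u [ui uM]] : exists u : {ffun VF -> 'I_n}, injective u /\ c u = M.
  have : 0 < #|[pred u : {ffun VF -> 'I_n} | injectiveb u]|.
    by apply/card_gt0P; exists u0; rewrite inE; apply/injectiveP.
  move/(eq_bigmax_cond c) => [u]; rewrite inE => /injectiveP ui hE.
  by exists u; split.
exists u; split => //; rewrite -/(c u) uM.
move: Ib NIb WIN key1 fb hn; set I := \sum_(u | _) _; set NI := \sum_(u | _) _.
set b := n ^_ f; set E := D ^ f; set t := #|T| => Ib NIb WIN key1 fb hn.
have npos : 0 < n by lia.
have apos : 0 < a by rewrite /a expn_gt0 npos.
have s1 : n * (a - b) <= f * f * a by rewrite mulnBr; lia.
have s2 : n * (a * t) <= n * (a * M * E) + f * f * a * t * E.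
  have : a * t <= a * M * E + (a - b) * t * E by nia.
  move=> h; have := leq_mul (leqnn n) h.
  have : n * ((a - b) * t * E) <= f * f * a * t * E.
    have := leq_mul s1 (leqnn (t * E)); set z := a - b; nia.
  nia.
have s3 : 2 * (f * f * a * t * E) <= n * (a * t).
  have : 2 * E * f * f <= n by lia.
  move=> h; have := leq_mul h (leqnn (a * t)); nia.
have s4 : n * a * t <= n * a * (M * (2 * E)) by nia.
by rewrite leq_pmul2l ?muln_gt0 ?npos ?apos in s4.
Qed.

Lemma count_cons n k (S : {set k.+1.-tuple 'I_n}) :
  \sum_(t : k.-tuple 'I_n) #|[set x | [tuple of x :: t] \in S]| = #|S|.
Proof.
under eq_bigr do rewrite card_sum.
rewrite exchange_big /= pair_bigA /= -card_sum.
pose g (p : 'I_n * k.-tuple 'I_n) := [tuple of p.1 :: p.2].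
pose h (t : k.+1.-tuple 'I_n) := (thead t, [tuple of behead t]).
have -> : [set p : 'I_n * k.-tuple 'I_n | [tuple of p.1 :: p.2] \in S] = g @^-1: S by apply/setP => p; rewrite !inE.
apply: on_card_preimset; exists h => [p _|t _].
  case: p => x t; rewrite /h /g /=; congr pair; exact: val_inj.
by rewrite /g /h /= [RHS]tuple_eta.
Qed.

Lemma erdos (VF : finType) k : forall D, 0 < D -> exists N, forall n, N <= n ->
  forall S : {set k.-tuple 'I_n}, n ^ k <= #|S| * D ->
  exists Y : nat -> {ffun VF -> 'I_n}, (forall i, i < k -> injective (Y i)) /\
    forall t : k.-tuple 'I_n, (forall i : 'I_k, tnth t i \in codom (Y i)) -> t \in S.
Proof.
elim: k => [|k IH] D D0.
  exists 1 => n n1 S hS.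
  exists (fun _ => [ffun _ => Ordinal n1]); split => // t _.
  have : 0 < #|S| by move: hS; rewrite expn0; case: #|S|.
  by case/card_gt0P => s; rewrite (tuple0 s) (tuple0 t).
set f := #|VF|.
have D'0 : 0 < 2 * D ^ f by rewrite muln_gt0 expn_gt0 D0.
have [N' HN'] := IH (2 * D ^ f) D'0.
exists (maxn N' (2 * D ^ f * f * f + f).+1) => n; rewrite geq_max => /andP [nN' nN] S hS.
have hS' : n * #|{: k.-tuple 'I_n}| <= (\sum_(t : k.-tuple 'I_n) #|[set x | [tuple of x :: t] \in S]|) * D.
  by rewrite count_cons card_tuple card_ord -expnS.
have [u [ui hu]] := @kst VF (k.-tuple 'I_n) n D (fun x t => [tuple of x :: t] \in S) D0 nN hS'.
rewrite card_tuple card_ord in hu.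
have [Y' [Y'i HY']] := HN' n nN' _ hu.
exists (fun i => if i is i'.+1 then Y' i' else u); split.
  by case=> [|i] // ik; apply: Y'i.
move=> t ht.
have hb : [tuple of behead t] \in [set t : k.-tuple 'I_n | [forall v, [tuple of u v :: t] \in S]].
  apply: HY' => i; rewrite tnth_behead.
  have := ht (inord i.+1); rewrite inordK ?ltnS //.
have := ht ord0 => /codomP [v hv].
rewrite inE in hb; have := forallP hb v.
by rewrite [t in _ -> t \in _]tuple_eta (_ : thead t = u v).
Qed.



Lemma extend k (n : nat) (VF : finType) (partF : VF -> 'I_k.+2) (EF : {set {set VF}})
  (E : {set {set hvert k.+2 n}}) m (phi : 'I_m -> VF -> hvert k.+2 n)
  (Y : nat -> {ffun VF -> 'I_n}) :
  kpartite_kgraph partF EF ->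
  is_F_tiling EF E phi ->
  (forall i : 'I_k.+2, injective (Y i)) ->
  (forall g : {ffun 'I_k.+2 -> 'I_n}, (forall i, g i \in codom (Y i)) ->
     [set (i, g i) | i : 'I_k.+2] \in E) ->
  (forall (i : 'I_k.+2) v, (i, Y i v) \notin tiling_cover phi) ->
  exists phi' : 'I_(m + k.+2) -> VF -> hvert k.+2 n, is_F_tiling EF E phi' /\
    forall i : 'I_k.+2,
      #|[set v : hvert k.+2 n | (v.1 == i) && (v \notin tiling_cover phi')]| =
      #|[set v : hvert k.+2 n | (v.1 == i) && (v \notin tiling_cover phi)]| - #|VF|.
Proof.
move=> kF [phii [phie phid]] Yi YE Yc.
pose psi (b : 'I_k.+2) (v : VF) : hvert k.+2 n := ((partF v + b)%R, Y (partF v + b)%R v).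
have psiE b v : psi b v = ((partF v + b)%R, Y (partF v + b)%R v) by [].
have psi_inj b b' v v' : psi b v = psi b' v' -> b = b' /\ v = v'.
  move=> h; have h1 : (partF v + b)%R = (partF v' + b')%R by exact: (congr1 fst h).
  have h2 : Y (partF v + b)%R v = Y (partF v' + b')%R v' by exact: (congr1 snd h).
  rewrite h1 in h2; have hv := Yi _ _ _ h2; subst v'; split => //.
  exact: (addrI _ h1).
pose phi' (l : 'I_(m + k.+2)) := match split l with inl a => phi a | inr b => psi b end.
have phiL a : phi' (lshift _ a) = phi a.
  by rewrite /phi'; have := unsplitK (inl a : 'I_m + 'I_k.+2) => /= ->.
have phiR b : phi' (rshift _ b) = psi b.
  by rewrite /phi'; have := unsplitK (inr b : 'I_m + 'I_k.+2) => /= ->.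
have incov a v : phi a v \in tiling_cover phi.
  by apply/bigcupP; exists a => //; apply/imsetP; exists v.
have lcase l : (exists a, l = lshift k.+2 a) \/ (exists b, l = rshift m b).
  by case: (split_ordP l) => x ->; [left|right]; exists x.
have disj (g1 g2 : VF -> hvert k.+2 n) : (forall x y, g1 x != g2 y) -> [disjoint codom g1 & codom g2].
  move=> H; apply/pred0P => z /=; apply/negbTE; apply/negP => /andP [/codomP [x ->] /codomP [y hy]].
  by move: (H x y); rewrite hy eqxx.
have psiC b v : psi b v \notin tiling_cover phi by rewrite psiE Yc.
exists phi'; split.
  split; [|split].
  - move=> l; case: (lcase l) => [[a ->]|[b ->]]; rewrite ?phiL ?phiR //.
    by move=> x y /psi_inj [].
  - move=> l e he; case: (lcase l) => [[a ->]|[b ->]]; rewrite ?phiL ?phiR; first exact: phie.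
    have [ek epart] := kF e he.
    have uq w w' : w \in e -> w' \in e -> partF w = partF w' -> w = w'.
      move=> hw hw' hp; have := epart (partF w) => /card_le1_eqP H.
      have m1 : w \in [set v in e | partF v == partF w] by rewrite inE hw eqxx.
      have m2 : w' \in [set v in e | partF v == partF w] by rewrite inE hw' hp eqxx.
      by have := H _ _ m1 m2.
    have surj i : exists2 w, w \in e & (partF w + b)%R = i.
      have hcard : #|[set (partF w + b)%R | w in e]| = k.+2.
        rewrite card_in_imset ?ek // => w w' hw hw' /addIr; exact: uq.
      have : i \in [set (partF w + b)%R | w in e].
        have -> : [set (partF w + b)%R | w in e] = setT.
          by apply/eqP; rewrite eqEcard subsetT cardsT card_ord hcard leqnn.
        by rewrite inE.
      by case/imsetP => w hw ->; exists w.
    have [w0 _ _] := surj ord0.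
    pose ch i := odflt w0 [pick w in e | (partF w + b)%R == i].
    have chP i : ch i \in e /\ (partF (ch i) + b)%R = i.
      rewrite /ch; case: pickP => [w /andP [hw /eqP hi]|none] //=.
      by have [w hw hi] := surj i; move: (none w); rewrite hw hi eqxx.
    pose g := [ffun i : 'I_k.+2 => Y i (ch i)].
    have -> : [set psi b x | x in e] = [set (i, g i) | i : 'I_k.+2].
      apply/setP => z; apply/imsetP/imsetP => [[w hw ->]|[i _ ->]].
        exists (partF w + b)%R => //; rewrite psiE ffunE; congr pair.
        have [h1 h2] := chP (partF w + b)%R.
        by rewrite (uq _ _ h1 hw (addIr _ h2)).
      have [h1 h2] := chP i; exists (ch i) => //; by rewrite psiE h2 ffunE.
    by apply: YE => i; rewrite ffunE codom_f.
  - move=> l l'.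
    case: (lcase l) => [[a ->]|[b ->]]; case: (lcase l') => [[a' ->]|[b' ->]]; rewrite ?phiL ?phiR => hne.
    + by apply: phid; apply: contra hne => /eqP ->.
    + apply: disj => x y; apply/eqP => h; by move: (psiC b' y); rewrite -h incov.
    + apply: disj => x y; apply/eqP => h; by move: (psiC b x); rewrite h incov.
    + apply: disj => x y; apply/eqP => /psi_inj [hb _]; by move: hne; rewrite hb eqxx.
have cov z : (z \in tiling_cover phi') = (z \in tiling_cover phi) || [exists b, exists v, z == psi b v].
  apply/bigcupP/orP => [[l _]|[/bigcupP [a _ hz]|/existsP [b /existsP [v /eqP ->]]]].
  - case: (lcase l) => [[a ->]|[b ->]]; rewrite ?phiL ?phiR => /imsetP [v _ ->].
      by left; exact: incov.
    by right; apply/existsP; exists b; apply/existsP; exists v.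
  - by exists (lshift k.+2 a); rewrite ?phiL.
  - by exists (rshift m b); rewrite ?phiR //; apply/imsetP; exists v.
move=> i.
set A := [set v : hvert k.+2 n | (v.1 == i) && (v \notin tiling_cover phi)].
set B := [set (i, Y i v) | v : VF].
have ex (y : 'I_n) : [exists b, exists v, ((i, y) : hvert k.+2 n) == psi b v] = (((i, y) : hvert k.+2 n) \in B).
  apply/existsP/imsetP => [[b /existsP [v /eqP h]]|[v _ h]].
    exists v => //; rewrite h psiE.
    have h1 : (partF v + b)%R = i := esym (congr1 fst h).
    by rewrite h1.
  exists (i - partF v)%R; apply/existsP; exists v; rewrite h psiE.
  have -> : (partF v + (i - partF v))%R = i by rewrite addrC subrK.
  by [].
have -> : [set v : hvert k.+2 n | (v.1 == i) && (v \notin tiling_cover phi')] = A :\: B.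
  apply/setP => -[j y]; rewrite !inE cov negb_or /=.
  case: (eqVneq j i) => [->|hj] /=; last by rewrite ?andbF.
  rewrite andbC; apply/andP/andP => -[h1 h2]; split => //.
  - by apply: contra h1; rewrite -ex; exact: id.
  - by apply: contra h1; rewrite -ex; exact: id.
have BA : B \subset A.
  by apply/subsetP => z /imsetP [v _ ->]; rewrite inE eqxx Yc.
rewrite cardsD (setIidPr BA) card_imset //.
by move=> v w [] /(Yi _).
Qed.

Unset Implicit Arguments. Set Strict Implicit.
Local Open Scope ring_scope.


Lemma part_card k n (i : 'I_k) (P : pred (hvert k n)) :
  #|[set v : hvert k n | (v.1 == i) && P v]| = #|[set x : 'I_n | P (i, x)]|.
Proof.
rewrite -[RHS](card_imset _ (fun x y (h : (i, x) = (i, y)) => congr1 snd h)).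
apply: eq_card => -[j y]; rewrite !inE /=; apply/andP/imsetP => [[/eqP -> h]|[x hx [-> ->]]].
  by exists y => //; rewrite inE.
by move: hx; rewrite inE eqxx.
Qed.

Theorem lemma5p1 (R : realType) (k f : nat) (p omega : R)
  (VF : finType) (partF : VF -> 'I_k) (EF : {set {set VF}}) :
  (2 <= k)%N -> (1 <= f)%N -> 0 < p < 1 -> 0 < omega < 1 ->
  #|VF| = f -> kpartite_kgraph partF EF ->
  exists mu0 : R, 0 < mu0 /\ exists n0 : nat,
    forall (mu : R) (n : nat), 0 < mu <= mu0 -> (n0 <= n)%N ->
    forall E : {set {set hvert k n}},
      kpartite_kgraph (fun v : hvert k n => v.1) E -> dense p mu E ->
      exists (m : nat) (phi : 'I_m -> VF -> hvert k n),
        is_F_tiling EF E phi /\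
        forall i : 'I_k,
          (#|[set v : hvert k n | (v.1 == i) && (v \notin tiling_cover phi)]|)%:R
            <= omega * n%:R.
Proof.
move: partF EF; case: k => [|[|k]] // partF EF _ f1 /andP [p0 p1] /andP [w0 w1] cVF kF.
set K := k.+2.
set c := p * omega ^+ K.
have c0 : 0 < c by rewrite mulr_gt0 // exprn_gt0.
set D := Num.Def.archi_bound (2 / c).
have hD : 2 / c < D%:R by apply: archi_boundP; rewrite divr_ge0 // ltW.
have D0 : (0 < D)%N.
  by rewrite lt0n; apply/eqP => h; move: hD; rewrite h ltNge divr_ge0 // ltW.
have [N HN] := erdos VF K D0.
set kk : R := (K ^ K)%:R.
have kk0 : 0 < kk by rewrite ltr0n expn_gt0.
exists (c / (2 * kk)); split; first by rewrite divr_gt0 // mulr_gt0.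
exists N => mu n /andP [mu0 mumu] nN E _ dens.
pose U m (phi : 'I_m -> VF -> hvert K n) (i : 'I_K) :=
  #|[set v : hvert K n | (v.1 == i) && (v \notin tiling_cover phi)]|.
suff claim : forall j, exists m (phi : 'I_m -> VF -> hvert K n), is_F_tiling EF E phi /\
   ((forall i, (U m phi i)%:R <= omega * n%:R) \/ (forall i, U m phi i = (n - j * f)%N)).
  have [m [phi [tl [h|h]]]] := claim n; exists m, phi; split => // i.
  rewrite /U in h; rewrite h (_ : (n - n * f = 0)%N); first by rewrite mulr_ge0 // ltW.
  apply/eqP; rewrite subn_eq0; apply: leq_pmulr; by rewrite -cVF in f1 *.
elim => [|j [m [phi [tl [case1|case2]]]]].
- exists 0%N, (fun l : 'I_0 => False_rect _ (notF (ltn_ord l))); split.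
    by split; [|split] => -[].
  right => i; rewrite mul0n subn0 /U part_card.
  rewrite /tiling_cover big_ord0 -[RHS](card_ord n); apply: eq_card => x; by rewrite !inE.
- by exists m, phi; split => //; left.
have [small|big] := boolP ((n - j * f)%:R <= omega * n%:R).
  by exists m, phi; split => //; left => i; rewrite case2.
rewrite -ltNge in big.
set sz := (n - j * f)%N in big case2.
pose X (i : 'I_K) := [set x : 'I_n | (i, x) \notin tiling_cover phi].
have cX i : #|X i| = sz by rewrite -(case2 i) /U part_card.
pose eset := [set t : {ffun 'I_K -> 'I_n} |
      [forall i, t i \in X i] && ([set (i, t i) | i : 'I_K] \in E)].
have eHE : e_H E X = #|eset| by [].
pose S := [set [tuple t i | i < K] | t : {ffun 'I_K -> 'I_n} in eset].
have cS : #|S| = #|eset|.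
  apply: card_imset => t t' h; apply/ffunP => i.
  by have := congr1 (fun u => tnth u i) h; rewrite /= !tnth_mktuple.
have nn0 : 0 <= n%:R :> R by [].
have ebound : c / 2 * n%:R ^+ K <= (e_H E X)%:R.
  apply: le_trans (dens X).
  have h1 : (omega * n%:R) ^+ K <= \prod_(i < K) (#|X i|)%:R.
    rewrite (eq_bigr (fun _ => sz%:R)); last by move=> i _; rewrite cX.
    rewrite prodr_const card_ord; apply: lerXn2r; rewrite ?nnegrE ?mulr_ge0 ?ler0n ?ltW //.
  have h2 : mu * (K * n)%:R ^+ K <= c / 2 * n%:R ^+ K.
    have e : c / (2 * kk) * kk = c / 2 by field; rewrite gt_eqF.
    rewrite natrM exprMn -[K%:R ^+ K]natrX -/kk mulrA; apply: ler_wpM2r; first exact: exprn_ge0.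
    by rewrite -e; apply: ler_wpM2r => //; exact: ltW.
  have h3 : c * n%:R ^+ K <= p * \prod_(i < K) (#|X i|)%:R.
    rewrite /c -mulrA; apply: ler_wpM2l; first exact: ltW. by rewrite -exprMn.
  have : c * n%:R ^+ K = c / 2 * n%:R ^+ K + c / 2 * n%:R ^+ K by rewrite -mulrDl -splitr.
  move: h2 h3; set a := c * n%:R ^+ K; set b := c / 2 * n%:R ^+ K; set z := mu * _; set w := p * _.
  move=> h2 h3 hab; lra.
have hS : (n ^ K <= #|S| * D)%N.
  rewrite -(ler_nat R) cS -eHE natrM natrX.
  have hD' : 2 <= c * D%:R.
    have := ler_wpM2r (ltW c0) (ltW hD); rewrite divfK ?gt_eqF // => h.
    by rewrite mulrC.
  set x := n%:R ^+ K in ebound *.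
  have x0 : 0 <= x by rewrite exprn_ge0.
  have h4 : x * 2 <= x * (c * D%:R) by apply: ler_wpM2l.
  have e2 : c / 2 * x * D%:R = x * (c * D%:R) / 2 by field.
  have h5 := ler_wpM2r (ler0n R D) ebound.
  rewrite e2 in h5; move: h4 h5; set y := x * (c * D%:R); set e := (e_H E X)%:R.
  move=> h4 h5; lra.
have [Y [Yi HY]] := HN n nN S hS.
have memS (g : {ffun 'I_K -> 'I_n}) : (forall i : 'I_K, g i \in codom (Y i)) ->
    exists2 t', t' \in eset & forall i, t' i = g i.
  move=> hg; have : [tuple g i | i < K] \in S by apply: HY => i; rewrite tnth_mktuple.
  case/imsetP => t' ht' heq; exists t' => // i.
  by have := congr1 (fun u => tnth u i) heq; rewrite /= !tnth_mktuple => ->.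
have YE (g : {ffun 'I_K -> 'I_n}) : (forall i, g i \in codom (Y i)) -> [set (i, g i) | i : 'I_K] \in E.
  move=> hg; have [t' ht' heq] := memS g hg; rewrite inE in ht'; case/andP: ht' => _ hE.
  have -> : [set (i, g i) | i : 'I_K] = [set (i, t' i) | i : 'I_K].
    by apply: eq_imset => i; rewrite heq.
  exact: hE.
have Yc (i : 'I_K) v : (i, Y i v) \notin tiling_cover phi.
  have hg : forall l : 'I_K, [ffun l0 : 'I_K => Y l0 v] l \in codom (Y l).
    by move=> l; rewrite ffunE codom_f.
  have [t' ht' heq] := memS _ hg.
  rewrite inE in ht'; case/andP: ht' => /forallP /(_ i); by rewrite inE heq ffunE.
have Yi' : forall i : 'I_K, injective (Y i) by move=> i; apply: Yi.
have [phi' [tl' hU]] := extend kF tl Yi' YE Yc.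
exists (m + K)%N, phi'; split => //; right => i.
by rewrite /U hU -/(U m phi i) case2 cVF mulSn addnC subnDA.
Qed.
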